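(* Assume $|V|\ge2$. Set $\kappa_\lambda:=\min_{x\ne y}\kappa_\lambda(x,y)$ for $\lambda>0$ and $\underline\kappa_0:=\min_{x\ne y}\underline\kappa(x,y)$. Then $\liminf_{\lambda\downarrow0}\kappa_\lambda/\lambda=\underline\kappa_0$.
   Context: Let $H=(V,E,w)$ be a weighted hypergraph: $V$ is a finite set, $E$ a set of nonempty subsets of $V$, $w\colon E\to\mathbb{R}_{>0}$. Write $x\sim y$ if some $e\in E$ contains both; $H$ is assumed connected. The degree is $d_x=\sum_{e\ni x}w_e>0$, $D=\mathrm{diag}(d_x)$. The distance $d(x,y)$ is the minimal $n$ with a chain $x=z_0\sim\cdots\sim z_n=y$. $\delta_x$ is the indicator of $x$. $\mathbb{R}^V$ carries the inner product $\langle f,g\rangle=\sum_x f(x)g(x)/d_x$ with norm $\|\cdot\|$. For $e\in E$ let $B_e=\mathrm{Conv}\{\delta_x-\delta_y : x,y\in e\}$. The multivalued hypergraph Laplacian is $L(f)=\{\sum_{e}w_e\mathtt{b}_e(\mathtt{b}_e^\top f) : \mathtt{b}_e\in\operatorname{argmax}_{\mathtt b\in B_e}\mathtt b^\top f\}$ and the normalized Laplacian is $\mathcal{L}f=L(D^{-1}f)$, a maximal monotone operator on $(\mathbb{R}^V,\langle\cdot,\cdot\rangle)$. For $\lambda>0$ the resolvent $J_\lambda=(I+\lambda\mathcal L)^{-1}$ is a single-valued map $\mathbb{R}^V\to\mathbb{R}^V$ (equivalently $J_\lambda f=\operatorname{argmin}_g\{\frac{1}{2\lambda}\|f-g\|^2+Q(D^{-1}g)\}$,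 $Q(g)=\frac12\sum_e w_e\max_{x,y\in e}(g(x)-g(y))^2$). A function $f$ is weighted $1$-Lipschitz if $|f(x)/d_x-f(y)/d_y|\le d(x,y)$ for all $x,y$; $\mathrm{Lip}^1_w(V)$ denotes the set of such functions. $\mathrm{KD}_\lambda(x,y)=\sup\{\langle J_\lambda f,\delta_x-\delta_y\rangle : f\in\mathrm{Lip}^1_w(V)\}$. For $x\ne y$: $\kappa_\lambda(x,y)=1-\mathrm{KD}_\lambda(x,y)/d(x,y)$ and $\underline\kappa(x,y)=\liminf_{\lambda\downarrow0}\kappa_\lambda(x,y)/\lambda$. *)

(* Defs.v *)
From HB Require Import structures.
From mathcomp Require Import all_boot all_order all_algebra.
From mathcomp Require Import all_classical all_reals all_analysis.
Set Implicit Arguments. Unset Strict Implicit. Unset Printing Implicit Defensive.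
Import Order.TTheory GRing.Theory Num.Theory.
Import numFieldNormedType.Exports.
Local Open Scope classical_set_scope.
Local Open Scope ring_scope.

Section Hypergraph.
Variables (R : realType) (V : finType) (E : {set {set V}}) (w : {set V} -> R).

Definition wf_hypergraph : Prop :=
  forall e, e \in E -> (0 < #|e|)%N /\ 0 < w e.

Definition adj (x y : V) : bool := [exists e in E, (x \in e) && (y \in e)].

Definition chain (n : nat) (x y : V) : Prop :=
  exists s : seq V, size s = n /\ path adj x s /\ last x s = y.

Definition connected_hg : Prop := forall x y, exists n, chain n x y.

Definition hdist (x y : V) : nat :=
  xget 0%N [set n | chain n x y /\ forall m, chain m x y -> (n <= m)%N].

Definition deg (x : V) : R := \sum_(e in E | x \in e) w e.

Definition ip (f g : V -> R) : R := \sum_x f x * g x / deg x.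

Definition nrm2 (f : V -> R) : R := ip f f.

Definition Qen (g : V -> R) : R :=
  2^-1 * \sum_(e in E) w e *
    \big[Num.max/0]_(p : V * V | (p.1 \in e) && (p.2 \in e)) (g p.1 - g p.2) ^+ 2.

Definition Dinv (g : V -> R) : V -> R := fun x => g x / deg x.

Definition resolvent_energy (lam : R) (f g : V -> R) : R :=
  (2 * lam)^-1 * nrm2 (fun x => f x - g x) + Qen (Dinv g).

Definition resolvent (lam : R) (f : V -> R) : V -> R :=
  xget (fun _ => 0) [set g | forall h, resolvent_energy lam f g <= resolvent_energy lam f h].

Definition Lipw1 : set (V -> R) :=
  [set f | forall x y, `|f x / deg x - f y / deg y| <= (hdist x y)%:R].

Definition delta2 (x y : V) : V -> R := fun z => (z == x)%:R - (z == y)%:R.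

Local Open Scope ereal_scope.

Definition KD (lam : R) (x y : V) : \bar R :=
  ereal_sup [set (ip (resolvent lam f) (delta2 x y))%:E | f in Lipw1].

Definition kappa (lam : R) (x y : V) : \bar R :=
  1%:E - KD lam x y * ((hdist x y)%:R^-1)%:E.

Definition kappa_over (x y : V) (lam : R) : \bar R := kappa lam x y * (lam^-1)%:E.

Definition kappa_low (x y : V) : \bar R := limf_einf (kappa_over x y) (0%R)^'+.

Definition kappa_min (lam : R) : \bar R :=
  \big[Order.min/+oo]_(p : V * V | p.1 != p.2) kappa lam p.1 p.2.

Definition kappa_low0 : \bar R :=
  \big[Order.min/+oo]_(p : V * V | p.1 != p.2) kappa_low p.1 p.2.

End Hypergraph.

(* Main.v *)
Require Import Defs.
From HB Require Import structures.
From mathcomp Require Import all_boot all_order all_algebra.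
From mathcomp Require Import all_classical all_reals all_analysis.
From mathcomp Require Import lra.
Import Order.TTheory GRing.Theory Num.Theory.
Import numFieldNormedType.Exports.
Local Open Scope classical_set_scope.
Local Open Scope ring_scope.

Lemma ereal_dense_le (R : realType) (x y : \bar R) :
  (forall r : R, (r%:E < x)%E -> (r%:E <= y)%E) -> (x <= y)%E.
Proof.
case: x => [s| |] H.
- case: y H => [t| |] H.
  + rewrite lee_fin leNgt; apply/negP => ts.
    have := H ((s + t) / 2); rewrite !lte_fin lee_fin => /(_ _).
    have h1 : (s + t) / 2 < s by rewrite ltr_pdivrMr //; lra.
    move=> /(_ h1); rewrite ler_pdivrMr //; lra.
  + by rewrite leey.
  + have h1 : s - 1 < s by lra.
    by have := H (s - 1); rewrite lte_fin => /(_ h1); rewrite leeNy_eq.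
- case: y H => [t| |] H.
  + have := H (t + 1) (ltry (t + 1)); rewrite lee_fin => ?; exfalso; lra.
  + by rewrite leey.
  + by have := H 0 (ltry (0:R)); rewrite leeNy_eq.
- by rewrite leNye.
Qed.

Lemma liminf_bigmin (R : realType) (I : finType) (P : pred I)
  (F : set_system R) (FF : Filter F) (W : set R) (f : R -> \bar R)
  (g : I -> R -> \bar R) :
  F W -> (forall x, W x -> f x = \big[Order.min/+oo%E]_(i | P i) g i x) ->
  limf_einf f F = \big[Order.min/+oo%E]_(i | P i) limf_einf (g i) F.
Proof.
move=> FW HW; apply/eqP; rewrite eq_le; apply/andP; split.
  apply: le_bigmin; first exact: leey.
  move=> i Pi; rewrite !limf_einfE.
  apply: ge_ereal_sup => _ [V FV <-]; apply: le_ereal_sup_tmp.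
  exists (ereal_inf (g i @` (V `&` W))); first by exists (V `&` W) => //; exact: filterI.
  apply: le_ereal_inf_tmp => _ [x [Vx Wx] <-].
  apply: (@le_trans _ _ (f x)); first by apply: ereal_inf_lbound; exists x.
  by rewrite HW //; exact: bigmin_le_cond.
apply: ereal_dense_le => r rM.
have hi : forall i, \forall x \near F, P i -> (r%:E < g i x)%E.
  move=> i; case Pi: (P i); last by apply: filterE.
  have : (r%:E < limf_einf (g i) F)%E by move/bigmin_gtP: rM => [_ /(_ i Pi)].
  rewrite limf_einfE => /ereal_sup_gtP [_ [V FV <-]] rV.
  apply: filterS FV => x Vx _; apply: lt_le_trans rV _.
  by apply: ereal_inf_lbound; exists x.
have FA := filter_forall FF hi.
set U := W `&` [set x | forall i, P i -> (r%:E < g i x)%E].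
have FU : F U by apply: filterI.
rewrite limf_einfE; apply: le_ereal_sup_tmp.
exists (ereal_inf (f @` U)); first by exists U.
apply: le_ereal_inf_tmp => _ [x [Wx Hx] <-].
rewrite HW //; apply: ltW; apply/bigmin_gtP; split => //.
by move/bigmin_gtP: rM => [].
Qed.

Theorem mainTheorem12 (R : realType) (V : finType) (E : {set {set V}})
    (w : {set V} -> R) :
  wf_hypergraph E w ->
  connected_hg E ->
  (forall x : V, 0 < deg E w x) ->
  (2 <= #|V|)%N ->
  limf_einf (fun lam : R => (kappa_min E w lam * (lam^-1)%:E)%E) (0%R)^'+
  = kappa_low0 E w.
Proof.
move=> _ _ _ _; rewrite /kappa_low0 /kappa_low.
apply: (@liminf_bigmin R _ _ _ _ [set lam | 0 < lam]).
  exact: nbhs_right_gt.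
move=> lam /= lam0; rewrite /kappa_min /kappa_over.
elim/big_rec2: _ => [|i y1 y2 _ h]; first by rewrite gt0_mulye // lte_fin invr_gt0.
rewrite -h; apply: mine_pMl; first by [].
by rewrite lee_fin invr_ge0 ltW.
Qed.
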